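(* Let $p \geq 5$ be a prime and let $G$ be a group of order $p^7$ of nilpotency class $5$ such that $\gamma_2(G)$ is elementary abelian of order $p^5$. Then: (i) $|\gamma_5(G)| = p$; (ii) $|\operatorname{Z}(G/\gamma_5(G))| = p^2$ and $|\operatorname{Z}_2(G)| = p^3$; (iii) $\operatorname{K}(G) \neq \gamma_2(G)$; (iv) the commutator length of $G$ is $2$.
   Context: For a group $G$, $[x,y] = x^{-1}y^{-1}xy$, $\operatorname{K}(G) = \{[a,b] \mid a,b \in G\}$, $\gamma_i(G)$ is the $i$-th term of the lower central series, $\operatorname{Z}(G)$ the center and $\operatorname{Z}_2(G)$ the second term of the upper central series. The commutator length of $G$ is the smallest positive integer $m$ such that every element of $\gamma_2(G)$ is a product of at most $m$ commutators in $G$. *)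

(* Defs.v *)
From mathcomp Require Import all_boot all_fingroup all_solvable.
Set Implicit Arguments.
Unset Strict Implicit.
Unset Printing Implicit Defensive.
Import GroupScope.
Local Open Scope group_scope.

Definition commutator_set (gT : finGroupType) (G : {set gT}) : {set gT} :=
  [set [~ a, b] | a in G, b in G].

Definition prod_of_commutators_le (gT : finGroupType) (G : {set gT})
    (m : nat) (x : gT) : Prop :=
  exists s : seq (gT * gT),
    [/\ size s <= m, all (fun c => (c.1 \in G) && (c.2 \in G)) s
      & x = \prod_(c <- s) [~ c.1, c.2]].

Definition commutator_width_le (gT : finGroupType) (G : {set gT}) (m : nat)
  : Prop := forall x, x \in 'L_2(G) -> prod_of_commutators_le G m x.

Definition commutator_length_is (gT : finGroupType) (G : {set gT}) (m : nat)
  : Prop :=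
  [/\ 0 < m, commutator_width_le G m &
      forall k, 0 < k -> k < m -> ~ commutator_width_le G k].

(* Main.v *)
Require Import Defs.
From mathcomp Require Import all_boot all_fingroup all_solvable.
Import GroupScope.
From mathcomp Require Import zify.
Set Implicit Arguments.
Unset Strict Implicit.
Unset Printing Implicit Defensive.

Section P33.
Variables (gT : finGroupType) (G : {group gT}) (p : nat).
Hypotheses (pr_p : prime p) (p_ge5 : 5 <= p) (oG : #|G| = (p ^ 7)%N)
  (cl5 : nil_class G = 5) (eA : p.-abelem 'L_2(G)) (oA : #|'L_2(G)| = (p ^ 5)%N).

Local Notation A := 'L_2(G).

Lemma p_gt1 : 1 < p. Proof. exact: prime_gt1. Qed.
Lemma pG : p.-group G. Proof. by rewrite /pgroup oG pnatX pnat_id. Qed.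
Lemma nilG : nilpotent G. Proof. exact: pgroup_nil pG. Qed.
Lemma abA : abelian A. Proof. by case/(abelemP pr_p): eA. Qed.
Lemma expA x : x \in A -> x ^+ p = 1. Proof. by case/(abelemP pr_p): eA => _; apply. Qed.
Lemma L6 : 'L_6(G) = 1. Proof. by apply/(lcn_nil_classP 5 nilG); rewrite cl5. Qed.
Lemma L5ne : 'L_5(G) != 1.
Proof. by apply/eqP=> h; have /(lcn_nil_classP 4 nilG) := h; rewrite cl5. Qed.
Lemma sAG : A \subset G. Proof. exact: lcn_sub. Qed.
Lemma nLG k : G \subset 'N('L_k(G)). Proof. exact: normal_norm (lcn_normal k G). Qed.
Lemma sLA k : 2 <= k -> 'L_k(G) \subset A. Proof. exact: lcn_sub_leq. Qed.
Lemma memL k u g : u \in 'L_k.+1(G) -> g \in G -> [~ u, g] \in 'L_k.+2(G).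
Proof. by move=> *; rewrite lcnSn mem_commg. Qed.
Lemma L5c u g : u \in 'L_5(G) -> g \in G -> [~ u, g] = 1.
Proof. by move=> Lu Gg; have := memL Lu Gg; rewrite L6 => /set1P. Qed.
Lemma inA x : x \in A -> x \in G. Proof. exact: (subsetP sAG). Qed.
Lemma inLA k x : 2 <= k -> x \in 'L_k(G) -> x \in A.
Proof. by move=> k2; apply: (subsetP (sLA k2)). Qed.
Lemma comAx x y : x \in A -> y \in A -> x * y = y * x.
Proof. by move=> Ax Ay; apply: (centsP abA). Qed.
Lemma conjA x y : x \in A -> y \in A -> x ^ y = x.
Proof. by move=> Ax Ay; rewrite conjgE (comAx Ax Ay) mulKg. Qed.
Lemma commA x y : x \in A -> y \in A -> [~ x, y] = 1.
Proof. by move=> Ax Ay; apply/eqP/commgP/comAx. Qed.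
Lemma RA x g : x \in G -> g \in G -> [~ x, g] \in A.
Proof. by move=> Gx Gg; rewrite lcn2 derg1 mem_commg. Qed.
Lemma RLA x g : x \in A -> g \in G -> [~ x, g] \in A.
Proof. by move=> Ax Gg; apply: RA => //; apply: inA. Qed.

Lemma XM g : g \in G -> {in A &, {morph (fun u => [~ u, g]) : x y / x * y}}.
Proof. by move=> Gg x y Ax Ay /=; rewrite commMgJ conjA // RLA. Qed.

Definition Xm g (Gg : g \in G) : {morphism A >-> gT} := Morphism (XM Gg).
Lemma XmE g (Gg : g \in G) u : Xm Gg u = [~ u, g]. Proof. by []. Qed.

Lemma conjGc u g h : u \in A -> g \in G -> h \in G -> u ^ (g * h) = u ^ (h * g).
Proof.
move=> Au Gg Gh; rewrite (commgC g h) conjgM (conjA _ (RA Gg Gh)) //.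
by rewrite memJ_norm // (subsetP (nLG 2)) // groupM.
Qed.

Lemma AJ x y : x \in A -> y \in G -> x ^ y \in A.
Proof. by move=> Ax Gy; rewrite memJ_norm // (subsetP (nLG 2)). Qed.

Lemma XXC u g h : u \in A -> g \in G -> h \in G ->
  [~ [~ u, g], h] = [~ [~ u, h], g].
Proof.
move=> Au Gg Gh; rewrite !commgEl.
have e1 : (u ^ g) ^ h = u ^ (h * g) by rewrite -conjgM conjGc.
have e2 : (u ^ h) ^ g = u ^ (h * g) by rewrite -conjgM.
have A1 : u ^ g \in A by apply: AJ. have A2 : u ^ h \in A by apply: AJ.
have Ay : u ^ (h * g) \in A by apply: AJ; rewrite // groupM.
move: e1 e2 A1 A2 Ay.
set x1 := u ^ g; set x2 := u ^ h; set y := u ^ (h * g) => e1 e2 A1 A2 Ay.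
rewrite (conjMg u^-1 x1 h) (conjMg u^-1 x2 g) (conjVg u h) (conjVg u g) e1 e2 -/x1 -/x2.
clearbody x1 x2 y.
rewrite !invMg !invgK (comAx (groupVr A1) Au) (comAx (groupVr A2) Au) -!mulgA.
by congr (_ * _); rewrite !mulgA (comAx (groupVr A1) (groupVr A2)).
Qed.

Lemma gen2_ind (a b : gT) (P : pred gT) : a \in G -> b \in G ->
  G \subset <<[set a; b]>> -> P 1 ->
  {in G &, forall x y, P x -> P y -> P (x * y)} -> P a -> P b ->
  {in G, forall x, P x}.
Proof.
move=> Ga Gb sG P1 PM Pa Pb.
have gS : group_set [set x in G | P x].
  apply/group_setP; split; first by rewrite inE group1 P1.
  by move=> x y; rewrite !inE => /andP[Gx Px] /andP[Gy Py]; rewrite groupM // PM.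
move=> x Gx; have: x \in Group gS.
  apply: (subsetP (subset_trans sG _)) Gx.
  by rewrite gen_subG subUset !sub1set !inE Ga Gb Pa Pb.
by rewrite inE => /andP[].
Qed.

Lemma XJ u g h : u \in A -> g \in G -> h \in G -> [~ u, g] ^ h = [~ u ^ h, g].
Proof.
move=> Au Gg Gh; rewrite conjRg (conjg_mulR g h) commgMJ commA ?RA ?AJ //.
by rewrite mul1g conjA // ?RA // inA // AJ.
Qed.

Lemma Xim_norm (B : {group gT}) g (Gg : g \in G) :
  B \subset A -> G \subset 'N(B) -> G \subset 'N(Xm Gg @* B).
Proof.
move=> sBA nBG; apply/normsP=> h Gh; apply/eqP; rewrite eqEcard cardJg leqnn andbT.
apply/subsetP=> y; rewrite mem_conjg => /morphimP[u Au Bu]; rewrite XmE => e.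
rewrite -(conjgKV h y) e XJ //; apply: mem_morphim; first exact: AJ.
by rewrite memJ_norm // (subsetP nBG).
Qed.

Lemma XimA (B : {group gT}) g (Gg : g \in G) : Xm Gg @* B \subset A.
Proof.
apply/subsetP=> y /morphimP[u Au _ ->]; exact: RLA.
Qed.

Lemma K2 a b (Ga : a \in G) (Gb : b \in G) (gen : G \subset <<[set a; b]>>)
  (B : {group gT}) : B \subset A -> G \subset 'N(B) ->
  forall x, x \in [~: B, G] ->
  exists2 u1, u1 \in B & exists2 u2, u2 \in B & x = [~ u1, a] * [~ u2, b].
Proof.
move=> sBA nBG.
set J := Xm Ga @* B <*> Xm Gb @* B.
have nJG : G \subset 'N(J) by rewrite normsY ?Xim_norm.
have sRJ : [~: B, G] \subset J.
  rewrite gen_subG; apply/subsetP=> _ /imset2P[u g Bu Gg ->].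
  have Au := subsetP sBA u Bu.
  pose P := fun g => [~ u, g] \in J.
  apply: (@gen2_ind a b P) => //.
  - by rewrite /P commg1 group1.
  - move=> x y Gx Gy Px Py; rewrite /P commgMJ groupM // memJ_norm //.
    exact: (subsetP nJG).
  - by rewrite /P (subsetP (joing_subl _ _)) // -(XmE Ga) mem_morphim.
  - by rewrite /P (subsetP (joing_subr _ _)) // -(XmE Gb) mem_morphim.
move=> x /(subsetP sRJ); rewrite /J comm_joingE; last first.
  apply: centC; apply: (subset_trans (XimA _ _)).
  apply: (subset_trans abA); apply: centS; exact: XimA.
case/mulsgP=> y1 y2 /morphimP[u1 _ Bu1 ->] /morphimP[u2 _ Bu2 ->] ->.
by exists u1 => //; exists u2.
Qed.

Lemma gen_frat a b : a \in G -> b \in G ->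
  G \subset <[b]> <*> (<[a]> <*> A) -> G \subset <<[set a; b]>>.
Proof.
move=> Ga Gb sG.
suff e : 'Phi(G) <*> [set a; b] = G by rewrite -{1}(Phi_nongen e).
apply/eqP; rewrite eqEsubset; apply/andP; split.
  by rewrite join_subG Phi_sub subUset !sub1set Ga Gb.
have sAP : A \subset 'Phi(G) by rewrite (Phi_joing pG) lcn2 joing_subl.
apply: (subset_trans sG); rewrite !join_subG !cycle_subG.
rewrite !(subsetP (joing_subr _ _)) ?set21 ?set22 //=.
exact: (subset_trans sAP (joing_subl _ _)).
Qed.

Lemma pidx (H K : {group gT}) : H \subset K -> K \subset G -> ~~ (K \subset H) ->
  p * #|H| <= #|K|.
Proof.
move=> sHK sKG nKH; rewrite -(Lagrange sHK).
have : #|K : H| %| p ^ 7 by rewrite -oG (dvdn_trans (dvdn_indexg K H)) ?cardSg.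
case/(dvdn_pfactor _ _ pr_p)=> m _ e.
have := indexg_gt1 K H; rewrite nKH e; case: m {e} => [|m] //= _.
rewrite expnS; have := expn_gt0 p m; have := p_gt1; nia.
Qed.

Lemma cyc_le x : x \in A -> #|<[x]>| <= p.
Proof.
move=> Ax; rewrite -orderE dvdn_leq ?prime_gt0 //.
by rewrite order_dvdn expA.
Qed.

Lemma mulcard_le (H K : {group gT}) : #|H * K| <= #|H| * #|K|.
Proof.
by rewrite mul_cardG leq_pmulr ?cardG_gt0.
Qed.

Lemma K3gen a b (Ga : a \in G) (Gb : b \in G) (gen : G \subset <<[set a; b]>>)
  (N : {group gT}) : G \subset 'N(N) -> [~ a, b] \in N -> A \subset N.
Proof.
move=> nNG abN.
have RM x y z : x \in G -> y \in G -> z \in G ->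
  [~ x, z] \in N -> [~ y, z] \in N -> [~ x * y, z] \in N.
  move=> Gx Gy Gz xN yN; rewrite commMgJ groupM // memJ_norm //.
  exact: (subsetP nNG).
have RMr x y z : x \in G -> y \in G -> z \in G ->
  [~ z, x] \in N -> [~ z, y] \in N -> [~ z, x * y] \in N.
  move=> Gx Gy Gz xN yN; rewrite commgMJ groupM // memJ_norm //.
  exact: (subsetP nNG).
have Ra : {in G, forall y, [~ a, y] \in N}.
  apply: (@gen2_ind a b (fun y => [~ a, y] \in N)) => //.
  - by rewrite commg1 group1.
  - by move=> x y Gx Gy; apply: RMr.
  - by rewrite commgg group1.
have Rb : {in G, forall y, [~ b, y] \in N}.
  apply: (@gen2_ind a b (fun y => [~ b, y] \in N)) => //.
  - by rewrite commg1 group1.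
  - by move=> x y Gx Gy; apply: RMr.
  - by rewrite -invgR groupV.
  - by rewrite commgg group1.
have Rall : {in G, forall x, [forall y in G, [~ x, y] \in N]}.
  apply: (@gen2_ind a b (fun x => [forall y in G, [~ x, y] \in N])) => //.
  - by apply/forall_inP=> y _; rewrite comm1g group1.
  - move=> x y Gx Gy /forall_inP Px /forall_inP Py; apply/forall_inP=> z Gz.
    by apply: RM => //; [apply: Px | apply: Py].
  - by apply/forall_inP.
  - by apply/forall_inP.
rewrite lcn2 derg1 gen_subG; apply/subsetP=> _ /imset2P[x y Gx Gy ->].
by have /forall_inP := Rall x Gx; apply.
Qed.


Lemma Lup n : 'L_n.+1(G) \subset 'L_n.+2(G) -> 'L_n.+2(G) \subset 'L_n.+3(G).
Proof. by move=> h; exact: (commSg G h). Qed.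

Lemma Lstrict k : 2 <= k <= 5 -> ~~ ('L_k(G) \subset 'L_k.+1(G)).
Proof.
case/andP=> k2 k5; apply/negP=> sk.
have : 'L_5(G) \subset 'L_6(G).
  case: k k2 k5 sk => [|[|[|[|[|[|k]]]]]] //= _ _ s.
  - exact: (Lup (Lup (Lup s))).
  - exact: (Lup (Lup s)).
  - exact: (Lup s).
by rewrite L6 subG1; apply/negP; rewrite L5ne.
Qed.

Lemma ordG (H : {group gT}) : H \subset G -> exists m, #|H| = (p ^ m)%N.
Proof.
move=> sHG; have : #|H| %| p ^ 7 by rewrite -oG cardSg.
by case/(dvdn_pfactor _ _ pr_p)=> m _ e; exists m.
Qed.

Lemma pw_gt (H : {group gT}) n : H \subset G -> p ^ n < #|H| -> p ^ n.+1 <= #|H|.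
Proof.
move=> sHG; have [m ->] := ordG sHG.
by rewrite !ltn_exp2l ?leq_exp2l ?p_gt1.
Qed.

Lemma ntriv (H : {group gT}) : H \subset G -> H :!=: 1 -> p <= #|H|.
Proof.
move=> sHG ntH; have := @pw_gt H 0 sHG; rewrite expn0 expn1; apply.
by rewrite cardG_gt1.
Qed.

Lemma Rpow f (Gf : f \in G) u k : u \in A -> [~ u, f ^+ k] \in Xm Gf @* A.
Proof.
move=> Au; elim: k => [|k IH]; first by rewrite commg1 group1.
rewrite expgSr commgMJ groupM //; first by rewrite -(XmE Gf) mem_morphim.
by rewrite memJ_norm // (subsetP (Xim_norm Gf (sLA (leqnn 2)) (nLG 2))).
Qed.

Lemma cycA_norm f : f \in G -> <[f]> \subset 'N(A).
Proof. by move=> Gf; rewrite cycle_subG (subsetP (nLG 2)). Qed.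

Lemma L1 f (Gf : f \in G) x y : x \in <[f]> <*> A -> y \in <[f]> <*> A ->
  [~ x, y] \in Xm Gf @* A.
Proof.
rewrite norm_joinEl ?cycA_norm //.
case/mulsgP=> _ u /cycleP[i ->] Au ->; case/mulsgP=> _ v /cycleP[j ->] Av ->.
have Gfi : f ^+ i \in G by rewrite groupX.
have Gfj : f ^+ j \in G by rewrite groupX.
have Gy : f ^+ j * v \in G by apply: groupM => //; apply: inA.
rewrite commMgJ (conjA (RA Gfi Gy) Au).
rewrite (commgMJ u) (commA Au Av) mul1g (conjA (RLA Au Gfj) Av).
rewrite commgMJ.
have -> : [~ f ^+ i, f ^+ j] = 1 by apply/eqP/commgP/commuteX2.
rewrite conj1g mulg1 -invgR groupM ?groupV ?Rpow //.
Qed.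

Lemma XimL3 f (Gf : f \in G) : Xm Gf @* A \subset 'L_3(G).
Proof. by apply/subsetP=> _ /morphimP[u Au _ ->]; rewrite XmE; apply: (@memL 1). Qed.

Lemma nfull f : f \in G -> ~~ (G \subset <[f]> <*> A).
Proof.
move=> Gf; apply/negP=> sG.
have : A \subset 'L_3(G).
  rewrite lcn2 derg1 gen_subG; apply/subsetP=> _ /imset2P[x y Gx Gy ->].
  by apply: (subsetP (XimL3 Gf)); apply: L1; apply: (subsetP sG).
by apply/negP; apply: Lstrict.
Qed.

Lemma cycJ_sub f (H : {group gT}) : f \in G -> H \subset G -> <[f]> <*> H \subset G.
Proof. by move=> Gf sHG; rewrite join_subG cycle_subG Gf. Qed.

Lemma gen_of g h : g \in G -> h \in G -> g \notin A -> h \notin <[g]> <*> A ->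
  G \subset <<[set g; h]>>.
Proof.
move=> Gg Gh nAg nMh; apply: gen_frat => //.
set M1 := <[g]> <*> A; set M2 := <[h]> <*> M1.
have sM1 : M1 \subset G by apply: cycJ_sub => //; apply: sAG.
have sM2 : M2 \subset G by apply: cycJ_sub.
have c1 : p * #|A| <= #|M1|.
  apply: pidx => //; first exact: joing_subr.
  by apply/subsetPn; exists g => //; rewrite (subsetP (joing_subl _ _)) ?cycle_id.
have c2 : p * #|M1| <= #|M2|.
  apply: pidx => //; first exact: joing_subr.
  by apply/subsetPn; exists h => //; rewrite (subsetP (joing_subl _ _)) ?cycle_id.
have : #|G| <= #|M2|.
  rewrite oG (leq_trans _ c2) // (leq_trans _ (leq_mul (leqnn p) c1)) //.
  by rewrite oA -!expnS.
by move=> le; have := subset_leqif_card sM2 => -[_ <-]; rewrite eqn_leq le subset_leq_card.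
Qed.


Lemma gens : exists a b, [/\ a \in G, b \in G & G \subset <<[set a; b]>>].
Proof.
have : ~~ (G \subset A).
  apply/negP=> sGA; have := subset_leq_card sGA; rewrite oG oA leq_exp2l ?p_gt1 //.
case/subsetPn=> a Ga nAa; have /subsetPn[b Gb nb] := nfull Ga.
by exists a, b; split=> //; apply: gen_of.
Qed.

Lemma normN n (N : {group gT}) : 'L_n.+2(G) \subset N -> N \subset 'L_n.+1(G) ->
  G \subset 'N(N).
Proof.
move=> s1 s2; rewrite -commg_subr commGC.
by apply: subset_trans s1; apply: commSg.
Qed.

Lemma Xin (N : {group gT}) g (Gg : g \in G) u k w : 1 <= k -> u \in A ->
  w \in <[u]> <*> 'L_k.+1(G) -> [~ u, g] \in N -> 'L_k.+2(G) \subset N ->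
  [~ w, g] \in N.
Proof.
move=> k1 Au; rewrite norm_joinEl; last by rewrite cycle_subG (subsetP (nLG _)) ?inA.
case/mulsgP=> _ r /cycleP[i ->] Lr -> uN sLN.
have Ar : r \in A by apply: (inLA (k:=k.+1)).
rewrite -(XmE Gg) morphM ?groupX // morphX // groupM ?groupX // XmE.
by apply: (subsetP sLN); apply: memL.
Qed.

Lemma step a' b' (Ga : a' \in G) (Gb : b' \in G) (gen : G \subset <<[set a'; b']>>)
  n s : 1 <= n -> s \in A -> [~ s, b'] \in 'L_n.+1(G) ->
  'L_n.+1(G) \subset <[ [~ s, a'] ]> <*> 'L_n.+2(G) ->
  'L_n.+2(G) \subset <[ [~ [~ s, a'], a'] ]> <*> 'L_n.+3(G).
Proof.
move=> n1 As sb sL.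
set t := [~ s, a']; set N := <[ [~ t, a'] ]> <*> 'L_n.+3(G).
have At : t \in A by apply: RLA.
have sLN : 'L_n.+3(G) \subset N by apply: joing_subr.
have tN : [~ t, a'] \in N by rewrite (subsetP (joing_subl _ _)) ?cycle_id.
have n2 : 1 <= n.+1 by [].
apply/subsetP=> x; rewrite lcnSn.
have sB : 'L_n.+1(G) \subset A by apply: sLA.
case/(K2 Ga Gb gen sB (nLG _))=> u1 Lu1 [u2 Lu2 ->].
rewrite groupM //.
  by apply: (Xin Ga (k:=n.+1) n2 At) => //; apply: (subsetP sL).
apply: (Xin Gb (k:=n.+1) n2 At); first exact: (subsetP sL).
  rewrite /t XXC //.
  by apply: (Xin Ga (k:=n.+1) n2 At) => //; apply: (subsetP sL).
by [].
Qed.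


Lemma CHP (H : {group gT}) x :
  ([~: [set x], G] \subset H) = [forall g in G, [~ x, g] \in H].
Proof.
rewrite gen_subG; apply/subsetP/forall_inP => h.
  by move=> g Gg; apply: h; apply: imset2_f; rewrite ?set11.
by move=> _ /imset2P[y g /set1P-> Gg ->]; apply: h.
Qed.

Lemma K4 a' b' (Ga : a' \in G) (Gb : b' \in G) (gen : G \subset <<[set a'; b']>>)
  (H : {group gT}) x : G \subset 'N(H) -> [~ x, a'] \in H -> [~ x, b'] \in H ->
  [~: [set x], G] \subset H.
Proof.
move=> nHG xa xb; rewrite CHP; apply/forall_inP.
apply: (@gen2_ind a' b' (fun g => [~ x, g] \in H)) => //.
  by rewrite commg1 group1.
move=> g h Gg Gh Pg Ph; rewrite commgMJ groupM // memJ_norm //.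
exact: (subsetP nHG).
Qed.

Lemma indep g h (Gg : g \in G) (Gh : h \in G) : G \subset <<[set g; h]>> ->
  [~ g, h] \notin 'L_3(G).
Proof.
move=> gen; apply/negP=> gh3.
set N := <[ [~ g, h] ]> <*> 'L_3(G).
have sN3 : N \subset 'L_3(G) by rewrite join_subG cycle_subG gh3 subxx.
have : A \subset N.
  apply: (K3gen Gg Gh gen); last by rewrite (subsetP (joing_subl _ _)) ?cycle_id.
  apply: (@normN 1); first exact: joing_subr.
  exact: (subset_trans sN3 (lcn_subS 2 G)).
by move/subset_trans/(_ sN3); apply/negP; apply: (Lstrict (k:=2)).
Qed.

Lemma CHsubA (H : {group gT}) x : H \subset 'L_3(G) -> x \in G ->
  [~: [set x], G] \subset H -> x \in A.
Proof.
move=> sH3 Gx; rewrite CHP => /forall_inP xH.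
apply/negPn/negP=> nAx; have /subsetPn[h Gh nh] := nfull Gx.
have := indep Gx Gh (gen_of Gx Gh nAx nh).
by rewrite (subsetP sH3) // xH.
Qed.

Lemma card_ker g (Gg : g \in G) (B : {group gT}) : B \subset A ->
  #|B| = (#|Xm Gg @* B| * #|B :&: 'ker (Xm Gg)|)%N.
Proof.
move=> sBA; rewrite card_morphim (setIidPr sBA) -indexgI mulnC.
by rewrite Lagrange // subsetIl.
Qed.

Definition Q := coset 'L_5(G) @*^-1 'Z(G / 'L_5(G)).

Lemma QP : Q = [set x in G | [~: [set x], G] \subset 'L_5(G)].
Proof.
have sQG : Q \subset G.
  rewrite -(quotientGK (lcn_normal 5 G)) morphpreS //; exact: center_sub.
apply/setP=> x; rewrite -(setIidPr sQG) [LHS]inE [RHS]inE.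
case Gx: (x \in G) => //=; have nZG := nLG 5.
rewrite /Q -sub1set -sub_quotient_pre -?quotient_cents2 ?sub1set ?(subsetP nZG) //.
by rewrite subsetI quotientS ?sub1set.
Qed.

Lemma QmemP x : reflect (x \in G /\ forall g, g \in G -> [~ x, g] \in 'L_5(G)) (x \in Q).
Proof.
rewrite QP inE CHP; apply: (iffP andP) => [[Gx /forall_inP h] | [Gx h]].
  by split.
by split=> //; apply/forall_inP.
Qed.

Lemma L4Q : 'L_4(G) \subset Q.
Proof.
apply/subsetP=> x Lx; apply/QmemP; split; first exact: (subsetP (lcn_sub 4 G)).
by move=> g Gg; apply: (@memL 3).
Qed.

Lemma ZP x : reflect (x \in G /\ forall g, g \in G -> [~ x, g] = 1) (x \in 'Z(G)).
Proof.
rewrite -ucn1 ucnSnR inE CHP; apply: (iffP andP) => [[Gx /forall_inP h] | [Gx h]].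
  by split=> // g Gg; apply/set1P; apply: h.
by split=> //; apply/forall_inP=> g Gg; rewrite h ?set11.
Qed.

Lemma Z2P x : reflect (x \in G /\ forall g, g \in G -> [~ x, g] \in 'Z(G)) (x \in 'Z_2(G)).
Proof.
rewrite ucnSnR inE CHP /= ucn1; apply: (iffP andP) => [[Gx /forall_inP h] | [Gx h]].
  by split.
by split=> //; apply/forall_inP.
Qed.


Lemma Q_in a' b' (Ga : a' \in G) (Gb : b' \in G) (gen : G \subset <<[set a'; b']>>) x :
  x \in G -> [~ x, a'] \in 'L_5(G) -> [~ x, b'] \in 'L_5(G) -> x \in Q.
Proof.
by move=> Gx xa xb; rewrite QP inE Gx (K4 Ga Gb gen (nLG 5)).
Qed.

Lemma ordp x : x \in A -> x != 1 -> #[x] = p.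
Proof.
move=> Ax nx; have n1 : #[x] != 1%N by rewrite order_eq1.
by apply/(@prime_nt_dvdP _ _ pr_p n1); rewrite order_dvdn expA.
Qed.

Lemma powA1 x y i : x \in A -> x != 1 -> x ^+ i = 1 -> y \in A -> y ^+ i = 1.
Proof.
move=> Ax nx xi Ay; apply/eqP; rewrite -order_dvdn.
have : #[x] %| i by rewrite order_dvdn xi.
rewrite ordp //; apply: dvdn_trans; by rewrite order_dvdn expA.
Qed.


Lemma Tgs x0 (N : {group gT}) : x0 \in G -> G \subset 'N(N) -> N \subset A ->
  (forall h g, h \in G -> g \in G -> [~ [~ x0, h], g] \in N) ->
  group_set ([set [~ x0, f] | f in G] * N).
Proof.
move=> Gx0 nNG sNA hN; apply/group_setP; split.
  by rewrite -[1]mulg1 mem_mulg // -(commg1 x0) imset_f.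
move=> _ _ /mulsgP[_ r /imsetP[f Gf ->] Nr ->] /mulsgP[_ s /imsetP[g Gg ->] Ns ->].
set xf := [~ x0, f]; set xg := [~ x0, g]; set k := [~ xf, g].
have Axf : xf \in A by apply: RA. have Axg : xg \in A by apply: RA.
have Nk : k \in N by apply: hN.
have Ak : k \in A := subsetP sNA k Nk.
have Ar : r \in A := subsetP sNA r Nr. have As : s \in A := subsetP sNA s Ns.
have e : [~ x0, f * g] = xg * (xf * k) by rewrite commgMJ conjg_mulR.
have -> : xf * r * (xg * s) = [~ x0, f * g] * (k^-1 * (r * s)).
  rewrite e; clearbody xf xg k.
  rewrite -!mulgA mulKVg (mulgA r xg s) (comAx Ar Axg) -(mulgA xg r s).
  by rewrite (mulgA xf xg) (comAx Axf Axg) -mulgA.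
by rewrite mem_mulg ?imset_f ?groupM ?groupV // groupM.
Qed.

Lemma Tmem x0 (N : {group gT}) t : t \in [set [~ x0, f] | f in G] * N ->
  exists2 f, f \in G & exists2 r, r \in N & t = [~ x0, f] * r.
Proof.
by case/mulsgP=> _ r /imsetP[f Gf ->] Nr ->; exists f => //; exists r.
Qed.

Section Gens.
Variables a b : gT.
Hypotheses (Ga : a \in G) (Gb : b \in G) (genab : G \subset <<[set a; b]>>).

Local Notation c := [~ a, b].

Lemma Ac : c \in A. Proof. exact: RA. Qed.

Lemma genba : G \subset <<[set b; a]>>. Proof. by rewrite setUC. Qed.

Lemma K3ab : A \subset <[c]> <*> 'L_3(G).
Proof.
apply: (K3gen Ga Gb genab); last by rewrite (subsetP (joing_subl _ _)) ?cycle_id.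
apply: (@normN 1); first exact: joing_subr.
by rewrite join_subG cycle_subG Ac (lcn_subS 2).
Qed.

Lemma o3 : #|'L_3(G)| = (p ^ 4)%N.
Proof.
apply/eqP; rewrite eqn_leq; apply/andP; split.
  have := pidx (lcn_subS 2 G) sAG (Lstrict (k:=2) isT).
  by rewrite oA expnS leq_pmul2l ?prime_gt0.
have := subset_leq_card K3ab; rewrite norm_joinEl; last first.
  by rewrite cycle_subG (subsetP (nLG _)) ?inA ?Ac.
move/leq_trans/(_ (mulcard_le _ _)); rewrite oA => h.
have := leq_trans h (leq_mul (cyc_le Ac) (leqnn _)).
by rewrite expnS leq_pmul2l ?prime_gt0.
Qed.


Lemma K5 u (N : {group gT}) : u \in A -> A \subset <[u]> <*> 'L_3(G) ->
  'L_4(G) \subset N -> [~ u, a] \in N -> [~ u, b] \in N -> 'L_3(G) \subset N.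
Proof.
move=> Au sA s4 ua ub.
apply/subsetP=> x; rewrite (lcnSn 1).
case/(K2 Ga Gb genab (sLA (leqnn 2)) (nLG _))=> u1 Lu1 [u2 Lu2 ->].
rewrite groupM //.
  by apply: (Xin Ga (k:=2) isT Au) => //; exact: (subsetP sA _ Lu1).
by apply: (Xin Gb (k:=2) isT Au) => //; exact: (subsetP sA _ Lu2).
Qed.

Lemma idx3 u : u \in A -> u \notin 'L_3(G) -> A \subset <[u]> <*> 'L_3(G).
Proof.
move=> Au nu; set M := <[u]> <*> 'L_3(G).
have sMA : M \subset A by rewrite join_subG cycle_subG Au (lcn_subS 2).
have sMG : M \subset G := subset_trans sMA sAG.
have := pidx (joing_subr _ _) sMG
  (introN idP (fun h => negP nu (subsetP h u (subsetP (joing_subl _ _) u (cycle_id u))))).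
rewrite o3 -expnS -oA => le.
by have := subset_leqif_card sMA => -[_ <-]; rewrite eqn_leq le subset_leq_card.
Qed.

Lemma d3 a' b' (Ga' : a' \in G) (Gb' : b' \in G) (gen' : G \subset <<[set a'; b']>>)
  s : s \in A -> [~ s, a'] \notin 'L_4(G) -> [~ s, b'] \in 'L_3(G) ->
  p ^ 2 < #|'L_4(G)| -> False.
Proof.
move=> As nt sb lt.
set t := [~ s, a'].
have At : t \in A by apply: RLA.
have Lt : t \in 'L_3(G) by apply: (@memL 1).
set M := <[t]> <*> 'L_4(G).
have sM3 : M \subset 'L_3(G) by rewrite join_subG cycle_subG Lt (lcn_subS 3).
have sMG : M \subset G := subset_trans sM3 (lcn_sub _ _).
have c1 := pidx (joing_subr _ _) sMG
  (introN idP (fun h => negP nt (subsetP h t (subsetP (joing_subl _ _) t (cycle_id t))))).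
have l4 := pw_gt (lcn_sub _ _) lt.
have s3M : 'L_3(G) \subset M.
  have := subset_leqif_card sM3 => -[_ <-].
  rewrite eqn_leq subset_leq_card //= o3.
  by rewrite (leq_trans _ c1) // expnS leq_mul2l l4 orbT.
have s1 := step Ga' Gb' gen' (n:=2) isT As sb s3M.
have Lt' : [~ t, b'] \in 'L_4(G) by apply: (@memL 2).
have s2 := step Ga' Gb' gen' (n:=3) isT At Lt' s1.
rewrite L6 joingG1 in s2.
have A2 : [~ [~ t, a'], a'] \in A by apply: RLA => //; apply: RLA.
have c5 : #|'L_5(G)| <= p := leq_trans (subset_leq_card s2) (cyc_le A2).
have A1 : [~ t, a'] \in A by apply: RLA.
move: s1; rewrite norm_joinEl; last by rewrite cycle_subG (subsetP (nLG _)) ?inA.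
move/subset_leq_card/leq_trans/(_ (mulcard_le _ _)) => h.
have := leq_trans h (leq_mul (cyc_le A1) c5).
move=> hh; have := leq_trans l4 hh; have e2 : (p ^ 2 = p * p)%N by rewrite expnS expn1.
rewrite expnS e2 -{2}[(p * p)%N]mul1n leq_pmul2r ?muln_gt0 ?prime_gt0 //; by rewrite leqNgt p_gt1.
Qed.


Lemma o45 : #|'L_4(G)| = (p ^ 2)%N /\ #|'L_5(G)| = p.
Proof.
have c45 := pidx (lcn_subS 4 G) (lcn_sub _ _) (Lstrict (k:=4) isT).
have c5 := ntriv (lcn_sub 5 G) L5ne.
have e2 : (p ^ 2 = p * p)%N by rewrite expnS expn1.
have l4 : #|'L_4(G)| <= p ^ 2.
  rewrite leqNgt; apply/negP => lt.
  have Lca : [~ c, a] \in 'L_3(G) by apply: (@memL 1) => //; apply: Ac.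
  have Lcb : [~ c, b] \in 'L_3(G) by apply: (@memL 1) => //; apply: Ac.
  case: (boolP ([~ c, a] \in 'L_4(G))) => ca.
    case: (boolP ([~ c, b] \in 'L_4(G))) => cb.
      have := K5 Ac K3ab (subxx _) ca cb.
      by apply/negP; apply: (Lstrict (k:=3)).
    exact: (d3 Gb Ga genba Ac cb Lca lt).
  exact: (d3 Ga Gb genab Ac ca Lcb lt).
have e4 : #|'L_4(G)| = (p ^ 2)%N.
  apply/eqP; rewrite eqn_leq l4 e2 (leq_trans _ c45) //.
  by rewrite leq_mul2l c5 orbT.
split => //; apply/eqP; rewrite eqn_leq c5 andbT.
by move: (leq_trans c45 l4); rewrite e2 leq_pmul2l ?prime_gt0.
Qed.


Lemma QA : Q \subset A.
Proof.
apply/subsetP=> x; rewrite QP inE => /andP[Gx sx].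
by apply: (CHsubA _ Gx sx); apply: lcn_sub_leq.
Qed.

Lemma Q3 : Q \subset 'L_3(G).
Proof.
apply/subsetP=> u Qu; have Au := subsetP QA u Qu.
apply/negPn/negP=> nu; case/QmemP: Qu => Gu h.
have := K5 Au (idx3 Au nu) (subxx _) (subsetP (lcn_subS 4 G) _ (h a Ga))
  (subsetP (lcn_subS 4 G) _ (h b Gb)).
by apply/negP; apply: (Lstrict (k:=3)).
Qed.

Lemma nQ3 : ~~ ('L_3(G) \subset Q).
Proof.
apply/negP=> s.
have : 'L_4(G) \subset 'L_5(G).
  rewrite (lcnSn 2) gen_subG; apply/subsetP=> _ /imset2P[x g Lx Gg ->].
  by have /QmemP[_ h] := subsetP s x Lx; apply: h.
by apply/negP; apply: (Lstrict (k:=4)).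
Qed.

Lemma Qle : #|Q| <= p ^ 3.
Proof.
have := pidx Q3 (lcn_sub 3 G) nQ3.
by rewrite o3 expnS leq_pmul2l ?prime_gt0.
Qed.

Lemma Qge' a' b' (Ga' : a' \in G) (Gb' : b' \in G) (gen' : G \subset <<[set a'; b']>>)
  w : w \in 'L_4(G) -> [~ w, a'] != 1 -> p ^ 3 <= #|Q|.
Proof.
move=> Lw nw; have [o4 o5] := o45.
have Aw : w \in A by apply: (inLA (k:=4)).
have nw5 : w \notin 'L_5(G).
  by apply/negP=> L5w; move: nw; rewrite (L5c L5w Ga') eqxx.
set M := <[w]> <*> 'L_5(G).
have sM4 : M \subset 'L_4(G) by rewrite join_subG cycle_subG Lw (lcn_subS 4).
have c1 := pidx (joing_subr _ _) (subset_trans sM4 (lcn_sub 4 G))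
  (introN idP (fun h => negP nw5 (subsetP h w (subsetP (joing_subl _ _) w (cycle_id w))))).
have s4 : 'L_4(G) \subset M.
  have := subset_leqif_card sM4 => -[_ <-].
  by rewrite eqn_leq subset_leq_card //= o4 (leq_trans _ c1) // o5 expnS expn1.
set f := Xm Ga'.
set P := 'L_3(G) :&: f @*^-1 'L_5(G).
have sPQ : P \subset Q.
  apply/subsetP=> u /setIP[L3u /morphpreP[Au]]; rewrite XmE => fu.
  have ub : [~ u, b'] \in 'L_5(G).
    have : [~ u, b'] \in M by apply: (subsetP s4); apply: (@memL 2).
    rewrite /M norm_joinEl; last by rewrite cycle_subG (subsetP (nLG _)) ?inA.
    case/mulsgP=> _ r /cycleP[i ->] L5r e.
    have e2 : [~ [~ u, b'], a'] = 1 by rewrite -XXC // L5c.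
    have Ar : r \in A by apply: (inLA (k:=5)).
    move: e2; rewrite e -(XmE Ga') morphM ?groupX // morphX // !XmE (L5c L5r Ga') mulg1.
    by move=> wi; rewrite (powA1 (RLA Aw Ga') nw wi Aw) mul1g.
  by apply: (Q_in Ga' Gb' gen') => //; apply: inA.
have sPA : P \subset A := subset_trans (subsetIl _ _) (lcn_subS 2 G).
have c3 := card_ker Ga' (sLA (k:=3) isT).
have cP := card_ker Ga' sPA.
set F := f @* 'L_3(G).
have sF4 : F \subset 'L_4(G).
  by apply/subsetP=> _ /morphimP[u Au L3u ->]; rewrite XmE; apply: (@memL 2).
have eFP : f @* P = F :&: 'L_5(G) by rewrite morphim_setIpre.
have cK : #|'L_3(G) :&: 'ker f| <= #|P :&: 'ker f|.
  apply: subset_leq_card; apply/subsetP=> u /setIP[L3u Ku].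
  apply/setIP; split=> //; apply/setIP; split=> //.
  exact: (subsetP (ker_sub_pre f 'L_5(G))).
have cF : #|F| <= p * #|F :&: 'L_5(G)|.
  have e := mul_cardG [group of F] 'L_5(G).
  have le : #|F * 'L_5(G)| <= #|'L_4(G)|.
    by apply: subset_leq_card; rewrite mul_subG // lcn_subS.
  have h : (#|F| * p <= p ^ 2 * #|F :&: 'L_5(G)|)%N.
    by rewrite -{1}o5 e -o4 leq_mul2r le orbT.
  by move: h; rewrite expnS expn1 -mulnA [(#|F| * p)%N]mulnC leq_pmul2l ?prime_gt0.
have : (p ^ 4 <= p * #|P|)%N.
  rewrite -o3 c3 cP eFP mulnA.
  by apply: leq_mul => //; rewrite mulnC.
rewrite expnS leq_pmul2l ?prime_gt0 // => h.
exact: leq_trans h (subset_leq_card sPQ).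
Qed.


Lemma Qge : p ^ 3 <= #|Q|.
Proof.
case: (boolP [exists w in 'L_4(G), [~ w, a] != 1]) => [/exists_inP[w Lw nw] | hA].
  exact: (Qge' Ga Gb genab Lw nw).
case: (boolP [exists w in 'L_4(G), [~ w, b] != 1]) => [/exists_inP[w Lw nw] | hB].
  exact: (Qge' Gb Ga genba Lw nw).
exfalso; suff s : 'L_5(G) \subset [1].
  by move/trivgP: s => e; move: L5ne; rewrite e eqxx.
rewrite (lcnSn 3) gen_subG; apply/subsetP=> _ /imset2P[w g Lw Gg ->].
have wa : [~ w, a] = 1.
  by apply/eqP/negPn/negP=> n; move: hA; apply/negP; rewrite negbK; apply/exists_inP; exists w.
have wb : [~ w, b] = 1.
  by apply/eqP/negPn/negP=> n; move: hB; apply/negP; rewrite negbK; apply/exists_inP; exists w.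
have := K4 Ga Gb genab (H := 1%G) (x := w) (norms1 _).
rewrite wa wb group1 => /(_ isT isT); rewrite CHP => /forall_inP; apply.
exact: Gg.
Qed.

Lemma oQ : #|Q| = (p ^ 3)%N.
Proof. by apply/eqP; rewrite eqn_leq Qle Qge. Qed.

Lemma L5Q : 'L_5(G) \subset Q.
Proof. exact: subset_trans (lcn_subS 4 G) L4Q. Qed.

Lemma oZq : #|'Z(G / 'L_5(G))| = (p ^ 2)%N.
Proof.
have [_ o5] := o45.
have <- : Q / 'L_5(G) = 'Z(G / 'L_5(G)) by rewrite /Q cosetpreK.
rewrite card_quotient; last first.
  exact: morphpre_sub.
apply/eqP; rewrite -(eqn_pmul2l (prime_gt0 pr_p)) -{1}o5 Lagrange ?L5Q //.
by rewrite oQ expnS.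
Qed.

Lemma sL5Z : 'L_5(G) \subset 'Z(G).
Proof.
apply/subsetP=> x L5x; apply/ZP; split; first exact: (subsetP (lcn_sub 5 G)).
by move=> g Gg; apply: L5c.
Qed.

Lemma sZQ : 'Z(G) \subset Q.
Proof.
apply/subsetP=> x /ZP[Gx h]; apply: (Q_in Ga Gb genab) => //; by rewrite h ?group1.
Qed.

Lemma sQZ2 : Q \subset 'Z_2(G).
Proof.
apply/subsetP=> x /QmemP[Gx h]; apply/Z2P; split=> // g Gg.
exact: (subsetP sL5Z) (h g Gg).
Qed.

Lemma Z2A : 'Z_2(G) \subset A.
Proof.
apply/subsetP=> x /Z2P[Gx h]; apply: (CHsubA (H := 'Z(G)%G)) Gx _.
  exact: subset_trans sZQ Q3.
by rewrite CHP; apply/forall_inP.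
Qed.

Lemma Z23 : 'Z_2(G) \subset 'L_3(G).
Proof.
apply/subsetP=> u Z2u; have Au := subsetP Z2A u Z2u.
apply/negPn/negP=> nu; case/Z2P: Z2u => Gu h.
have := K5 (N := [group of Q]) Au (idx3 Au nu) L4Q (subsetP sZQ _ (h a Ga))
  (subsetP sZQ _ (h b Gb)).
by apply/negP; apply: nQ3.
Qed.

Lemma nZ2 : ~~ ('L_3(G) \subset 'Z_2(G)).
Proof.
apply/negP=> s.
have s4 : 'L_4(G) \subset 'Z(G).
  rewrite (lcnSn 2) gen_subG; apply/subsetP=> _ /imset2P[x g Lx Gg ->].
  by have /Z2P[_ h] := subsetP s x Lx; apply: h.
suff s5 : 'L_5(G) \subset [1].
  by move/trivgP: s5 => e; move: L5ne; rewrite e eqxx.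
rewrite (lcnSn 3) gen_subG; apply/subsetP=> _ /imset2P[x g Lx Gg ->].
by have /ZP[_ h] := subsetP s4 x Lx; rewrite h ?set11.
Qed.

Lemma oZ2 : #|'Z_2(G)| = (p ^ 3)%N.
Proof.
apply/eqP; rewrite eqn_leq -{2}oQ subset_leq_card ?sQZ2 // andbT.
have := pidx Z23 (lcn_sub 3 G) nZ2.
by rewrite o3 expnS leq_pmul2l ?prime_gt0.
Qed.


Lemma tstar : exists t, [/\ t \in A, t != 1 &
  forall g h, g \in G -> h \in G -> [~ g, h] != t].
Proof.
have [o4 o5] := o45.
have Lc : c \in A := Ac.
have [t0 Qt0 nt0] : exists2 t0, t0 \in Q & t0 \notin 'L_4(G).
  apply/subsetPn/negP=> sQ4; have := subset_leq_card sQ4.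
  by rewrite oQ o4 leq_exp2l ?p_gt1.
have hN : forall h g, h \in G -> g \in G -> [~ [~ c, h], g] \in 'L_4(G).
  by move=> h g Gh Gg; apply: (@memL 2) => //; apply: (@memL 1).
have gT4 := Tgs (inA Ac) (nLG 4) (sLA (k:=4) isT) hN.
set T := Group gT4.
have s4T : 'L_4(G) \subset T.
  apply/subsetP=> x Lx; rewrite -[x]mul1g mem_mulg //=.
  by rewrite -(commg1 c) imset_f.
have cT g : g \in G -> [~ c, g] \in T.
  by move=> Gg; rewrite -[_ _ g]mulg1 mem_mulg ?imset_f.
have s3T : 'L_3(G) \subset T.
  apply/subsetP=> x; rewrite (lcnSn 1).
  case/(K2 Ga Gb genab (sLA (leqnn 2)) (nLG _))=> u1 Lu1 [u2 Lu2 ->].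
  rewrite groupM //.
    apply: (Xin Ga (k:=2) isT Lc) => //; first exact: (subsetP K3ab).
    exact: cT.
  apply: (Xin Gb (k:=2) isT Lc) => //; first exact: (subsetP K3ab).
  exact: cT.
have [e Ge [r L4r er]] := Tmem (subsetP s3T t0 (subsetP Q3 t0 Qt0)).
set ce := [~ c, e].
have Qce : ce \in Q.
  have -> : ce = t0 * r^-1 by rewrite er mulgK.
  by rewrite groupM ?groupV // (subsetP L4Q).
have nce : ce \notin 'L_4(G).
  by apply/negP=> h; move: nt0; rewrite er groupM.
have Ace : ce \in A by apply: RLA.
have X3 : Xm Ge @* 'L_3(G) \subset 'L_5(G).
  apply/subsetP=> _ /morphimP[t At L3t ->]; rewrite XmE.
  have [f Gf [r' L4r' ->]] := Tmem (subsetP s3T t L3t).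
  have Ar' : r' \in A by apply: (inLA (k:=4)).
  rewrite (XM Ge (RLA Lc Gf) Ar') /= (XXC Lc Gf Ge) groupM //.
    by case/QmemP: Qce => _; apply.
  exact: (@memL 3).
have cX : #|Xm Ge @* A| <= p ^ 2.
  have c3 := card_ker Ge (sLA (k:=3) isT).
  have cA := card_ker Ge (subxx A).
  have k3 : p ^ 3 <= #|'L_3(G) :&: 'ker (Xm Ge)|.
    have := leq_trans (eq_leq c3) (leq_mul (subset_leq_card X3) (leqnn _)).
    by rewrite o3 o5 expnS leq_pmul2l ?prime_gt0.
  have kA : p ^ 3 <= #|A :&: 'ker (Xm Ge)|.
    by apply: leq_trans k3 _; apply: subset_leq_card; apply: setSI; apply: lcn_subS.
  have := leq_trans (leq_mul (leqnn #|Xm Ge @* A|) kA) (eq_leq (esym cA)).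
  by rewrite oA -[5]/(2 + 3) expnD leq_pmul2r ?expn_gt0 ?prime_gt0.
set L := <[ce]> <*> 'L_4(G).
have sL3 : L \subset 'L_3(G).
  by rewrite join_subG cycle_subG (lcn_subS 3) andbT; apply: (@memL 1).
have sLG : L \subset G := subset_trans sL3 (lcn_sub 3 G).
have cL1 : p ^ 3 <= #|L|.
  have := pidx (joing_subr _ _) sLG
   (introN idP (fun h => negP nce (subsetP h ce (subsetP (joing_subl _ _) ce (cycle_id ce))))).
  by rewrite o4 -expnS.
have cL2 : #|L| <= p ^ 3.
  rewrite /L norm_joinEl; last by rewrite cycle_subG (subsetP (nLG _)) ?inA.
  apply: leq_trans (mulcard_le _ _) _; rewrite o4 expnS.
  exact: leq_mul (cyc_le Ace) (leqnn _).
have [t Lt ntU] : exists2 t, t \in L & t \notin 'L_4(G) :|: Xm Ge @* A.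
  apply/subsetPn/negP=> sU; have := subset_leq_card sU.
  rewrite cardsU => h; have := leq_trans h (leq_subr _ _).
  have := leq_add (eq_leq o4) cX.
  move/(leq_trans _)=> hh /hh; apply/negP; rewrite -ltnNge.
  apply: (leq_trans _ cL1); rewrite addnn -muln2 (expnS p 2) mulnC ltn_mul2r.
  by rewrite expn_gt0 prime_gt0 //= (leq_ltn_trans _ p_ge5).
rewrite inE negb_or in ntU; case/andP: ntU => nt4 ntX.
have Lt3 : t \in 'L_3(G) := subsetP sL3 t Lt.
have At : t \in A by apply: (inLA (k:=3)).
exists t; split=> //.
  by apply/negP=> /eqP t1; move: nt4; rewrite t1 group1.
move=> g h Gg Gh; apply/eqP=> ght.
have [f [Gf nAf gM hM]] : exists f, [/\ f \in G, f \notin A, g \in <[f]> <*> A &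
    h \in <[f]> <*> A].
  case: (boolP (g \in A)) => Ag.
    case: (boolP (h \in A)) => Ah.
      by move: nt4; rewrite -ght commA // group1.
    exists h; split=> //; first by rewrite (subsetP (joing_subr _ _)).
    by rewrite (subsetP (joing_subl _ _)) ?cycle_id.
  case: (boolP (h \in <[g]> <*> A)) => hg.
    exists g; split=> //; by rewrite (subsetP (joing_subl _ _)) ?cycle_id.
  have := indep Gg Gh (gen_of Gg Gh Ag hg); by rewrite ght Lt3.
have /morphimP[u Au _ tu] : t \in Xm Gf @* A by rewrite -ght; apply: L1.
rewrite XmE in tu.
case: (boolP (f \in <[e]> <*> A)) => fe.
  have sfe : <[f]> <*> A \subset <[e]> <*> A.
    by rewrite join_subG cycle_subG fe joing_subr.
  move: ntX; rewrite -ght L1 //; [exact: (subsetP sfe) | exact: (subsetP sfe)].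
have nAe : e \notin A.
  by apply/negP=> Ae; move: nce; rewrite /ce commA // group1.
have genef := gen_of Ge Gf nAe fe.
have nu3 : u \notin 'L_3(G).
  by apply/negP=> u3; move: nt4; rewrite tu (@memL 2 u f u3 Gf).
have sAu := idx3 Au nu3.
have s4L : 'L_4(G) \subset L by apply: joing_subr.
have s3L : 'L_3(G) \subset L.
  apply/subsetP=> x; rewrite (lcnSn 1).
  case/(K2 Ge Gf genef (sLA (leqnn 2)) (nLG _))=> u1 Lu1 [u2 Lu2 ->].
  rewrite groupM //.
    apply: (Xin Ge (k:=2) isT Lc) => //; first exact: (subsetP K3ab).
    by rewrite (subsetP (joing_subl _ _)) ?cycle_id.
  apply: (Xin Gf (k:=2) isT Au) => //; first exact: (subsetP sAu).
  by rewrite -tu.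
have := leq_trans (subset_leq_card s3L) cL2.
by rewrite o3 leq_exp2l ?p_gt1.
Qed.


Lemma commVA g u : g \in G -> u \in A -> [~ g, u^-1] = [~ u, g].
Proof.
by move=> Gg Au; rewrite -invgR -(XmE Gg (u^-1)) morphV // invgK.
Qed.

Lemma width2 : commutator_width_le G 2.
Proof.
move=> x Lx.
have hN : forall h g, h \in G -> g \in G -> [~ [~ a, h], g] \in 'L_3(G).
  by move=> h g Gh Gg; apply: (@memL 1) => //; apply: RA.
have gT3 := Tgs Ga (nLG 3) (sLA (k:=3) isT) hN.
set T := Group gT3.
have s3T : 'L_3(G) \subset T.
  apply/subsetP=> y Ly; rewrite -[y]mul1g mem_mulg //=.
  by rewrite -(commg1 a) imset_f.
have sAT : A \subset T.
  apply: subset_trans K3ab _; rewrite join_subG s3T andbT cycle_subG.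
  by rewrite -[c]mulg1 mem_mulg ?imset_f.
have [h Gh [r L3r ->]] := Tmem (subsetP sAT x Lx).
have : r \in [~: 'L_2(G), G] := L3r.
case/(K2 Ga Gb genab (sLA (leqnn 2)) (nLG _))=> u1 Lu1 [u2 Lu2 ->].
exists [:: (a, h * u1^-1); (b, u2^-1)]; split=> //.
  by rewrite /= Ga Gb !andbT (groupM Gh) ?groupV ?inA.
rewrite big_cons big_cons big_nil /= mulg1.
rewrite commgMJ (commVA Ga Lu1) (commVA Gb Lu2) (conjA (RA Ga Gh) (groupVr Lu1)).
rewrite mulgA; congr (_ * _).
by rewrite (comAx (RA Ga Gh) (RLA Lu1 Ga)).
Qed.

End Gens.


Lemma main : [/\ #|'L_5(G)| = p,
      #|'Z(G / 'L_5(G))| = (p ^ 2)%N /\ #|'Z_2(G)| = (p ^ 3)%N,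
      commutator_set G != 'L_2(G)
    & commutator_length_is G 2].
Proof.
have [a [b [Ga Gb gen]]] := gens.
have [t [At nt1 nt]] := tstar Ga Gb gen.
split.
- by case: (o45 Ga Gb gen).
- by split; [exact: (oZq Ga Gb gen) | exact: (oZ2 Ga Gb gen)].
- apply/negP=> /eqP e; move: At; rewrite -e => /imset2P[g h Gg Gh e'].
  by move: (nt g h Gg Gh); rewrite e' eqxx.
split=> //; first exact: (width2 Ga Gb gen).
move=> k k0 k2 w1; have [s [ss alls ts]] := w1 t At.
case: s ss alls ts => [|[g h] [|? ?]] /= ss.
- by rewrite big_nil => _ t1; move: nt1; rewrite t1 eqxx.
- rewrite andbT big_cons big_nil mulg1 => /andP[Gg Gh] e.
  by move: (nt g h Gg Gh); rewrite e eqxx.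
- by have := leq_ltn_trans ss k2.
Qed.

End P33.

Theorem proposition3p3 (gT : finGroupType) (G : {group gT}) (p : nat) :
  prime p -> 5 <= p ->
  #|G| = (p ^ 7)%N ->
  nil_class G = 5 ->
  p.-abelem 'L_2(G) -> #|'L_2(G)| = (p ^ 5)%N ->
  [/\ #|'L_5(G)| = p,
      #|'Z(G / 'L_5(G))| = (p ^ 2)%N /\ #|'Z_2(G)| = (p ^ 3)%N,
      commutator_set G != 'L_2(G)
    & commutator_length_is G 2].
Proof. move=> pr_p p5 oG cl5 eA oA; exact: main. Qed.
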